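(* Let the setting and Assumption (A) be as in the context and assume Assumption (A) holds. Let $\delta_0\le\frac{c_0}{\varsigma^2}\frac{\overline\sigma}{\|\mathbf X\|_{\infty,2}}$ with $c_0\in[0,1/2)$ a sufficiently small absolute constant. Then there exists a constant $c=c(c_0)\in(0,1)$ such that for all $k\in[K]$ and all $\theta\in\mathbb{R}^L$ with $\|\theta-\theta_k^*\|_2\le\delta_0/\overline\sigma$, $$(1-c)\underline\sigma^2\le\lambda_L(H_\theta)\le\lambda_1(H_\theta)\le(1+c)\overline\sigma^2.$$
   Context: $\mathbf X\in\mathbb{R}^{p\times L}$ has rows $x_j^\top$, $\|\mathbf X\|_{\infty,2}=\max_j\|x_j\|_2$; $A(x_j;\theta)=\exp(x_j^\top\theta)/\sum_l\exp(x_l^\top\theta)$, $A(\theta)\in\Delta^p$; $H_\theta=\mathbf X^\top(\mathrm{diag}(A(\theta))-A(\theta)A(\theta)^\top)\mathbf X$, with eigenvalues $\lambda_1\ge\dots\ge\lambda_L$. For $\omega=(\boldsymbol\alpha,\theta_1,\dots,\theta_K)$, $\pi(x_j;\omega)=\sum_k\alpha_kA(x_j;\theta_k)$. $\omega^*=(\boldsymbol\alpha^*,\theta_1^*,\dots,\theta_K^* )$ with all $\alpha^*_k>0$, $\pi^*=\pi(\cdot;\omega^* )$, and $\omega^*\in\Omega^*$, the set of maximizers of $\sum_j\pi^*(x_j)\log\pi(x_j;\omega)$. Assumption (A): constants $0<\underline\sigma^2\le\overline\sigma^2$, $\varsigma^2<\infty$ such that for every $\omega'\in\Omega^*$, $a,b\in[K]$,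 $u\in[0,1]$, $\theta=u\theta'_a+(1-u)\theta'_b$: $\underline\sigma^2\le\lambda_L(H_\theta)\le\lambda_1(H_\theta)\le\overline\sigma^2$ and $\lambda_1(H_\theta^{-1/2}\mathbf X^\top\mathrm{diag}(A(\theta))\mathbf XH_\theta^{-1/2})\le\varsigma^2$. *)

(* Defs.v *)
From HB Require Import structures.
From mathcomp Require Import all_boot all_order all_algebra.
From mathcomp Require Import all_classical all_reals all_analysis.
Set Implicit Arguments. Unset Strict Implicit. Unset Printing Implicit Defensive.
Import Order.TTheory GRing.Theory Num.Theory.
Local Open Scope ring_scope.

Section Defs.
Variable R : realType.

Definition norm2 (L : nat) (v : 'cV[R]_L) : R := Num.sqrt (\sum_l (v l 0) ^+ 2).

Definition norm_inf2 (p L : nat) (X : 'M[R]_(p, L)) : R :=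
  \big[Num.max/0]_(j < p) Num.sqrt (\sum_l (X j l) ^+ 2).

Definition Asm (p L : nat) (X : 'M[R]_(p, L)) (th : 'cV[R]_L) (j : 'I_p) : R :=
  expR ((X *m th) j 0) / \sum_(l < p) expR ((X *m th) l 0).

Definition Avec (p L : nat) (X : 'M[R]_(p, L)) (th : 'cV[R]_L) : 'cV[R]_p :=
  \col_j Asm X th j.

Definition Hmat (p L : nat) (X : 'M[R]_(p, L)) (th : 'cV[R]_L) : 'M[R]_L :=
  X^T *m (diag_mx (Avec X th)^T - Avec X th *m (Avec X th)^T) *m X.

Definition Mmat (p L : nat) (X : 'M[R]_(p, L)) (th : 'cV[R]_L) : 'M[R]_L :=
  X^T *m diag_mx (Avec X th)^T *m X.

Definition mix (p L K : nat) (X : 'M[R]_(p, L)) (al : 'I_K -> R)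
  (ths : 'I_K -> 'cV[R]_L) (j : 'I_p) : R :=
  \sum_k al k * Asm X (ths k) j.

Definition in_simplex (K : nat) (al : 'I_K -> R) : Prop :=
  (forall k, 0 <= al k) /\ \sum_k al k = 1.

Definition loglik (p L K : nat) (X : 'M[R]_(p, L)) (als : 'I_K -> R)
  (thss : 'I_K -> 'cV[R]_L) (al : 'I_K -> R) (ths : 'I_K -> 'cV[R]_L) : R :=
  \sum_j mix X als thss j * ln (mix X al ths j).

Definition in_Omega_star (p L K : nat) (X : 'M[R]_(p, L)) (als : 'I_K -> R)
  (thss : 'I_K -> 'cV[R]_L) (al : 'I_K -> R) (ths : 'I_K -> 'cV[R]_L) : Prop :=
  in_simplex al /\
  forall (al' : 'I_K -> R) (ths' : 'I_K -> 'cV[R]_L),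
    in_simplex al' -> loglik X als thss al' ths' <= loglik X als thss al ths.

(* Assumption (A). Eigenvalues are those of mxalgebra ([eigenvalue]).
   The eigenvalues of H^{-1/2} M H^{-1/2} are those of the similar matrix
   H^{-1} M. *)
Definition assumptionA (p L K : nat) (X : 'M[R]_(p, L)) (als : 'I_K -> R)
  (thss : 'I_K -> 'cV[R]_L) (slo2 shi2 vs2 : R) : Prop :=
  0 < slo2 /\ slo2 <= shi2 /\
  forall (al' : 'I_K -> R) (ths' : 'I_K -> 'cV[R]_L),
    in_Omega_star X als thss al' ths' ->
    forall (a b : 'I_K) (u : R), 0 <= u <= 1 ->
      let th := u *: ths' a + (1 - u) *: ths' b in
      (forall lam, eigenvalue (Hmat X th) lam -> slo2 <= lam <= shi2) /\
      (forall lam, eigenvalue (invmx (Hmat X th) *m Mmat X th) lam -> lam <= vs2).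

End Defs.

(* Main.v *)
Require Import Defs.
From HB Require Import structures.
From mathcomp Require Import all_boot all_order all_algebra.
From mathcomp Require Import all_classical all_reals all_analysis.
From mathcomp Require Import complex spectral sesquilinear.
From mathcomp Require Import ring lra.
Set Implicit Arguments. Unset Strict Implicit.
Import Order.TTheory GRing.Theory Num.Theory.
Local Open Scope ring_scope.

Section Ray.
Local Open Scope sesquilinear_scope.
Lemma rayleigh (R : rcfType) n (H : 'M[R]_n) (a b : R) (v : 'rV_n) :
  H^T = H ->
  ((forall l, eigenvalue H l -> a <= l) -> a * (v *m v^T) 0 0 <= (v *m H *m v^T) 0 0) /\ ((forall l, eigenvalue H l -> l <= b) -> (v *m H *m v^T) 0 0 <= b * (v *m v^T) 0 0).
Proof.
move=> HT.
pose toC := real_complex R.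
pose Hc := map_mx toC H.
have Hreal : Hc \is a realmx.
  by apply/mxOverP => i j; rewrite mxE; apply/complex_realP; exists (H i j).
have Hsym : Hc \is symmetricmx.
  apply/is_hermitianmxP; rewrite expr0 scale1r; apply/matrixP => i j.
  by rewrite !mxE -[in LHS]HT mxE.
have Hherm := realsym_hermsym Hsym Hreal.
have /orthomx_spectralP HE := hermitian_normalmx Hherm.
set P := spectralmx Hc in HE; set d := spectral_diag Hc in HE.
have Pu : P \is unitarymx := spectral_unitarymx Hc.
have Punit : P \in unitmx := spectral_unit Hc.
have iP : invmx P = P^t* := invmx_unitary Pu.
have dreal : d \is a realmx := hermitian_spectral_diag_real Hherm.
have deig : forall i, exists r, d 0 i = toC r /\ eigenvalue H r.
  move=> i; have dR : d 0 i = toC (complex.Re (d 0 i)) by rewrite /toC RRe_real // (mxOverP dreal).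
  exists (complex.Re (d 0 i)); split => //.
  have ev : eigenvalue Hc (d 0 i).
  apply/eigenvalueP; exists (delta_mx 0 i *m P).
    rewrite HE !mulmxA mulmxK // -[delta_mx 0 i *m diag_mx d]rowE row_diag_mx -scalemxAl //.
  apply/negP => /eqP h.
  have := congr1 (mulmx^~ (invmx P)) h.
  rewrite /= mul0mx mulmxK // => /matrixP /(_ 0 i); rewrite !mxE !eqxx /= => /eqP.
  by rewrite oner_eq0.
  rewrite eigenvalue_root_char -(fmorph_root toC) map_char_poly -eigenvalue_root_char.
  rewrite dR in ev; exact: ev.
pose vc := map_mx toC v.
have vcT : vc^t* = vc^T.
  apply/matrixP => i j; rewrite !mxE; apply: conj_Creal; apply/complex_realP.
  by exists (v j i).
have PP : P^t* *m P = 1%:M by rewrite -iP mulVmx.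
pose w := vc *m P^t*.
have wT : w^t* = P *m vc^t*.
  by rewrite /w trmx_mul map_mxM trmxCK.
have mE : forall A : 'M[R]_1, toC (A 0 0) = (map_mx toC A) 0 0 by move=> A; rewrite mxE.
have e1 : toC ((v *m H *m v^T) 0 0) = (w *m diag_mx d *m w^t*) 0 0.
  rewrite mE map_mxM map_mxM -map_trmx -/vc -/Hc HE iP wT vcT.
  by rewrite /w !mulmxA.
have e2 : toC ((v *m v^T) 0 0) = (w *m w^t*) 0 0.
  rewrite mE map_mxM -map_trmx -/vc wT vcT /w.
  by rewrite mulmxA -(mulmxA vc) PP mulmx1.
clearbody w.
have key : forall c : R, (forall i, toC c <= d 0 i) -> toC c * (w *m w^t*) 0 0 <= (w *m diag_mx d *m w^t*) 0 0.
  move=> c hc; rewrite !mxE mulr_sumr; apply: ler_sum => j _.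
  rewrite mul_mx_diag !mxE mulrAC (mulrC (toC c)).
  by apply: ler_wpM2l; [rewrite mul_conjC_ge0 | apply: hc].
have key2 : forall c : R, (forall i, d 0 i <= toC c) -> (w *m diag_mx d *m w^t*) 0 0 <= toC c * (w *m w^t*) 0 0.
  move=> c hc; rewrite !mxE mulr_sumr; apply: ler_sum => j _.
  rewrite mul_mx_diag !mxE mulrAC (mulrC (toC c)).
  by apply: ler_wpM2l; [rewrite mul_conjC_ge0 | apply: hc].
split => hyp.
  have h1 : forall i, toC a <= d 0 i.
    by move=> i; have [r [-> ev]] := deig i; rewrite /toC lecR; exact: hyp.
  have := key a h1.
  by rewrite -e1 -e2 /toC -rmorphM /= lecR.
have h2 : forall i, d 0 i <= toC b.
  by move=> i; have [r [-> ev]] := deig i; rewrite /toC lecR; exact: hyp.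
have := key2 b h2.
by rewrite -e1 -e2 /toC -rmorphM /= lecR.
Qed.
End Ray.

Section H2.
Variable R : realType.

Lemma Asm_ge0 p L (X : 'M[R]_(p, L)) th j : 0 <= Asm X th j.
Proof.
rewrite /Asm divr_ge0 // ?expR_ge0 //; apply: sumr_ge0 => i _; exact: expR_ge0.
Qed.

Lemma sumAsm p L (X : 'M[R]_(p, L)) th : (0 < p)%N -> \sum_j Asm X th j = 1.
Proof.
move=> p0; rewrite /Asm -mulr_suml divff //.
rewrite gt_eqF // (bigD1 (Ordinal p0)) //= ltr_pwDl ?expR_gt0 //.
by apply: sumr_ge0 => i _; exact: expR_ge0.
Qed.

Lemma var_shift p (w y : 'I_p -> R) c : \sum_j w j = 1 ->
  \sum_j w j * (y j - c) ^+ 2 =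
  (\sum_j w j * y j ^+ 2 - (\sum_j w j * y j) ^+ 2) + (\sum_j w j * y j - c) ^+ 2.
Proof.
move=> hw.
have -> : \sum_j w j * (y j - c) ^+ 2 =
   \sum_j w j * y j ^+ 2 - 2 * c * \sum_j w j * y j + c ^+ 2 * \sum_j w j.
  rewrite !mulr_sumr -sumrB -big_split /=; apply: eq_bigr => j _; ring.
rewrite hw; ring.
Qed.

Definition Qv p (w y : 'I_p -> R) :=
  \sum_j w j * y j ^+ 2 - (\sum_j w j * y j) ^+ 2.

Lemma Qv_cmp p (w w' y : 'I_p -> R) (K : R) : \sum_j w j = 1 -> \sum_j w' j = 1 ->
  (forall j, 0 <= w j) -> (forall j, w' j <= K * w j) ->
  Qv w' y <= K * Qv w y.
Proof.
move=> h1 h2 hw hK.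
pose c := \sum_j w j * y j.
have e1 := var_shift y c h1.
have e2 := var_shift y c h2.
rewrite /c subrr expr0n /= addr0 in e1.
rewrite /Qv -e1.
apply: (@le_trans _ _ (\sum_j w' j * (y j - c) ^+ 2)).
  rewrite e2 lerDl; exact: sqr_ge0.
rewrite mulr_sumr; apply: ler_sum => j _.
rewrite mulrA; apply: ler_wpM2r; [exact: sqr_ge0| exact: hK].
Qed.

Lemma CS n (a b : 'I_n -> R) :
  (\sum_i a i * b i) ^+ 2 <= (\sum_i a i ^+ 2) * (\sum_i b i ^+ 2).
Proof.
set A := \sum_i a i ^+ 2; set B := \sum_i b i ^+ 2; set C := \sum_i a i * b i.
have hB : 0 <= B by apply: sumr_ge0 => i _; exact: sqr_ge0.
have key : 0 <= \sum_i (B * a i - C * b i) ^+ 2 by apply: sumr_ge0 => i _; exact: sqr_ge0.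
have eq : \sum_i (B * a i - C * b i) ^+ 2 = B * (A * B - C ^+ 2).
  have -> : \sum_i (B * a i - C * b i) ^+ 2 =
     \sum_i (B ^+ 2 * a i ^+ 2 - 2 * B * C * (a i * b i) + C ^+ 2 * b i ^+ 2).
    by apply: eq_bigr => j _; ring.
  rewrite big_split sumrB /= -!mulr_sumr -/A -/B -/C; ring.
rewrite eq in key.
case: (ltrP 0 B) => hB0.
  by rewrite -subr_ge0; rewrite pmulr_rge0 in key.
have B0 : B = 0 by apply/eqP; rewrite eq_le hB0 hB.
have b0 : forall i, b i = 0.
  move=> i; have := @psumr_eq0P _ _ predT (fun i => b i ^+ 2) (fun i _ => sqr_ge0 (b i)) B0 i isT.
  by move/eqP; rewrite sqrf_eq0 => /eqP.
have -> : C = 0 by rewrite /C big1 // => i _; rewrite b0 mulr0.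
by rewrite B0 expr0n /= mulr0.
Qed.

Lemma CS_abs n (a b : 'I_n -> R) :
  `|\sum_i a i * b i| <= Num.sqrt (\sum_i a i ^+ 2) * Num.sqrt (\sum_i b i ^+ 2).
Proof.
rewrite -sqrtrM; last by apply: sumr_ge0 => i _; exact: sqr_ge0.
rewrite -sqrtr_sqr; rewrite ler_sqrt //; last first.
  by apply: mulr_ge0; apply: sumr_ge0 => i _; exact: sqr_ge0.
exact: CS.
Qed.

End H2.
Section H3.
Variable R : realType.

Lemma quadH p L (X : 'M[R]_(p, L)) th (v : 'rV_L) :
  (v *m Hmat X th *m v^T) 0 0 =
  \sum_j Asm X th j * ((v *m X^T) 0 j) ^+ 2 - (\sum_j Asm X th j * (v *m X^T) 0 j) ^+ 2.
Proof.
set y := v *m X^T.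
have -> : v *m Hmat X th *m v^T = y *m (diag_mx (Avec X th)^T - Avec X th *m (Avec X th)^T) *m y^T.
  by rewrite /Hmat /y trmx_mul trmxK !mulmxA.
have d1 : (y *m diag_mx (Avec X th)^T *m y^T) 0 0 = \sum_j Asm X th j * (y 0 j) ^+ 2.
  rewrite mul_mx_diag mxE; apply: eq_bigr => j _; rewrite !mxE; ring.
have d2 : (y *m (Avec X th *m (Avec X th)^T) *m y^T) 0 0 = (\sum_j Asm X th j * y 0 j) ^+ 2.
  rewrite mulmxA -mulmxA mxE big_ord1 expr2.
  congr (_ * _); rewrite mxE; apply: eq_bigr => j _; rewrite !mxE; ring.
rewrite mulmxBr mulmxBl -d1 -d2 [in LHS]mxE; congr (_ + _); by rewrite mxE.
Qed.

Lemma Hmat_sym p L (X : 'M[R]_(p, L)) th : (Hmat X th)^T = Hmat X th.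
Proof.
by rewrite /Hmat !trmx_mul trmxK linearB /= tr_diag_mx trmx_mul trmxK !mulmxA.
Qed.

Lemma HM p L (X : 'M[R]_(p, L)) th :
  Mmat X th = Hmat X th + (X^T *m Avec X th) *m (X^T *m Avec X th)^T.
Proof.
rewrite /Hmat /Mmat mulmxBr mulmxBl trmx_mul trmxK !mulmxA subrK //.
Qed.

Lemma Asm_ratio p L (X : 'M[R]_(p, L)) th th' (m : R) j :
  (forall i, `|(X *m th') i 0 - (X *m th) i 0| <= m) ->
  Asm X th' j <= expR m ^+ 2 * Asm X th j.
Proof.
move=> hm.
have up : forall i, expR ((X *m th') i 0) <= expR m * expR ((X *m th) i 0).
  move=> i; rewrite -expRD ler_expR.
  by have := hm i; rewrite ler_norml => /andP[_ h]; lra.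
have lo : forall i, expR (- m) * expR ((X *m th) i 0) <= expR ((X *m th') i 0).
  move=> i; rewrite -expRD ler_expR.
  by have := hm i; rewrite ler_norml => /andP[h _]; lra.
have S0 : 0 < \sum_l expR ((X *m th) l 0).
  rewrite (bigD1 j) //= ltr_pwDl ?expR_gt0 //.
  by apply: sumr_ge0 => i _; exact: expR_ge0.
have S1 : expR (- m) * \sum_l expR ((X *m th) l 0) <= \sum_l expR ((X *m th') l 0).
  by rewrite mulr_sumr; apply: ler_sum => i _; exact: lo.
have S1p : 0 < expR (- m) * \sum_l expR ((X *m th) l 0) by rewrite mulr_gt0 ?expR_gt0.
rewrite /Asm.
apply: (@le_trans _ _ (expR m * expR ((X *m th) j 0) / (expR (- m) * \sum_l expR ((X *m th) l 0)))).
  apply: le_trans (_ : expR ((X *m th') j 0) / (expR (- m) * \sum_l expR ((X *m th) l 0)) <= _).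
    by apply: ler_wpM2l; [exact: expR_ge0 | rewrite lef_pV2 ?posrE //; exact: lt_le_trans S1].
  by apply: ler_wpM2r; [rewrite invr_ge0 ltW | exact: up].
rewrite expRN le_eqVlt; apply/orP; left; apply/eqP.
have : expR m != 0 by rewrite gt_eqF ?expR_gt0.
move=> hne; field; rewrite hne /= gt_eqF //.
Qed.

End H3.

Section H4.
Variable R : realType.

Lemma unit_of_eig n (H : 'M[R]_n) a : 0 < a -> (forall l, eigenvalue H l -> a <= l) ->
  H \in unitmx.
Proof.
move=> a0 hl; apply/negPn/negP => hn.
suff /hl : eigenvalue H 0 by rewrite leNgt a0.
apply/eigenvalueP; exists (nz_row (kermx H)).
  rewrite scale0r; apply/sub_kermxP; exact: nz_row_sub.
by rewrite nz_row_eq0 kermx_eq0 row_free_unit.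
Qed.

Lemma vs2_ge1 p L (X : 'M[R]_(p, L)) th a vs2 : (0 < L)%N -> 0 < a ->
  (forall l, eigenvalue (Hmat X th) l -> a <= l) ->
  (forall l, eigenvalue (invmx (Hmat X th) *m Mmat X th) l -> l <= vs2) -> 1 <= vs2.
Proof.
move=> L0 a0 hl hv.
set H := Hmat X th.
have Hu : H \in unitmx := unit_of_eig a0 hl.
set w := X^T *m Avec X th.
have E : invmx H *m Mmat X th = 1%:M + invmx H *m w *m w^T.
  by rewrite HM -/H -/w mulmxDr mulVmx // mulmxA.
clearbody w.
case: (eqVneq w 0) => w0.
  apply: hv; apply/eigenvalueP; exists (const_mx 1).
    by rewrite E w0 mulmx0 mul0mx addr0 mulmx1 scale1r.
  apply/negP => /eqP/matrixP/(_ 0 (Ordinal L0)); rewrite !mxE => /eqP.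
  by rewrite oner_eq0.
set s := (w^T *m invmx H *m w) 0 0.
have s0 : 0 <= s.
  set u := w^T *m invmx H.
  have -> : s = (u *m H *m u^T) 0 0.
    by rewrite /s /u [(w^T *m invmx H)^T]trmx_mul trmx_inv Hmat_sym -/H trmxK mulmxKV // [in RHS]mulmxA.
  have [lo _] := rayleigh a a u (Hmat_sym X th).
  have hh := lo hl; have hz : 0 <= a * (u *m u^T) 0 0; last exact: le_trans hz hh.
  apply: mulr_ge0; first exact: ltW.
  rewrite mxE; apply: sumr_ge0 => i _.
  have -> : u^T i 0 = u 0 i by rewrite [LHS]mxE.
  by rewrite -expr2 sqr_ge0.
suff h : eigenvalue (invmx H *m Mmat X th) (1 + s) by apply: le_trans _ (hv _ h); rewrite lerDl.
apply/eigenvalueP; exists w^T.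
  rewrite E mulmxDr mulmx1 !mulmxA [w^T *m _ *m _]mx11_scalar mul_scalar_mx.
  by rewrite scalerDl scale1r.
by rewrite trmx_eq0.
Qed.

End H4.

Section H5.
Variable R : realType.

Lemma zdiff p L (X : 'M[R]_(p, L)) th th' i :
  `|(X *m th') i 0 - (X *m th) i 0| <= norm_inf2 X * norm2 (th' - th).
Proof.
have -> : (X *m th') i 0 - (X *m th) i 0 = \sum_l X i l * (th' - th) l 0.
  have -> : (X *m th') i 0 - (X *m th) i 0 = (X *m (th' - th)) i 0.
    by rewrite mulmxBr !mxE.
  by rewrite mxE.
apply: le_trans (CS_abs _ _) _.
rewrite /norm2; apply: ler_wpM2r; first exact: sqrtr_ge0.
rewrite /norm_inf2.
exact: (le_bigmax 0 (fun j : 'I_p => Num.sqrt (\sum_l X j l ^+ 2)) i).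
Qed.

Lemma norm_inf2_ge0 p L (X : 'M[R]_(p, L)) : (0 < p)%N -> 0 <= norm_inf2 X.
Proof.
move=> p0; apply: le_trans (sqrtr_ge0 (\sum_l X (Ordinal p0) l ^+ 2)) _.
exact: (le_bigmax 0 (fun j : 'I_p => Num.sqrt (\sum_l X j l ^+ 2)) (Ordinal p0)).
Qed.

End H5.

Lemma fin_lo (R : realFieldType) (S T : R) : S <= 3/2 * T -> 0 <= T -> (1 - 1/2) * S <= T.
Proof. move=> *; lra. Qed.
Lemma fin_hi (R : realFieldType) (S T : R) : T <= 3/2 * S -> 0 <= S -> T <= (1 + 1/2) * S.
Proof. move=> *; lra. Qed.

Unset Implicit Arguments.

Theorem lemma8 :
  forall R : realType,
  exists cbar : R, 0 < cbar <= 1/2 /\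
  forall c0 : R, 0 <= c0 < cbar ->
  exists c : R, 0 < c < 1 /\
  forall (p L K : nat) (X : 'M[R]_(p, L))
    (als : 'I_K -> R) (thss : 'I_K -> 'cV[R]_L)
    (slo shi vs2 delta0 : R),
    in_Omega_star X als thss als thss ->
    (forall k, 0 < als k) ->
    0 < slo <= shi ->
    assumptionA X als thss (slo ^+ 2) (shi ^+ 2) vs2 ->
    delta0 <= c0 / vs2 * (shi / norm_inf2 X) ->
    forall (k : 'I_K) (th : 'cV[R]_L),
      norm2 (th - thss k) <= delta0 / shi ->
      forall lam, eigenvalue (Hmat X th) lam ->
        (1 - c) * slo ^+ 2 <= lam <= (1 + c) * shi ^+ 2.
Proof.
move=> R; exists (1/8); split; first by apply/andP; split; lra.
move=> c0 /andP[c00 c0lt]; exists (1/2); split; first by apply/andP; split; lra.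
move=> p L K X als thss slo shi vs2 delta0 Hom Hal /andP[slo0 sloshi] HA Hd k th Hn lam Hev.
case: HA => _ [_ HA].
have u01 : (0 <= (1:R) <= 1) by rewrite ler01 lexx.
have [Hb Hv] := HA als thss Hom k k 1 u01.
have e : 1 *: thss k + (1 - 1) *: thss k = thss k by rewrite scale1r subrr scale0r addr0.
rewrite e in Hb Hv.
set ths := thss k in Hb Hv Hn.
have shi0 : 0 < shi by apply: lt_le_trans sloshi.
have [v hv vn0] := eigenvalueP Hev.
have L0 : (0 < L)%N.
  rewrite lt0n; apply/negP => /eqP L0; move/negP: vn0; apply; apply/eqP/matrixP => i [j hj].
  by exfalso; move: hj; rewrite L0.
case: (posnP p) => [p0|p0].
  have X0 : X = 0 by apply/matrixP => [[i hi]]; exfalso; move: hi; rewrite p0.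
  have HH : Hmat X th = Hmat X ths by rewrite /Hmat X0 !mulmx0.
  rewrite HH in Hev; have /andP[h1 h2] := Hb _ Hev.
  have : 0 <= slo ^+ 2 by exact: sqr_ge0.
  by move=> ?; apply/andP; split; lra.
have vs1 : 1 <= vs2.
  apply: (vs2_ge1 L0 (a := slo ^+ 2)); first by rewrite exprn_gt0.
    by move=> l hl; case/andP: (Hb l hl).
  exact: Hv.
set N := norm_inf2 X.
have N0 : 0 <= N := norm_inf2_ge0 X p0.
set m := N * norm2 (th - ths).
have hm : forall i, `|(X *m th) i 0 - (X *m ths) i 0| <= m by move=> i; exact: zdiff.
have hm' : forall i, `|(X *m ths) i 0 - (X *m th) i 0| <= m by move=> i; rewrite distrC.
have m0 : 0 <= m by rewrite mulr_ge0 // sqrtr_ge0.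
have mc : m <= c0.
  have h1 : m <= N * (delta0 / shi) by apply: ler_wpM2l.
  case: (eqVneq N 0) => N00.
    by move: h1; rewrite N00 mul0r => h1; apply: le_trans h1 c00.
  have h2 : N * (delta0 / shi) <= N * ((c0 / vs2 * (shi / N)) / shi).
    apply: ler_wpM2l => //; apply: ler_wpM2r => //; by rewrite invr_ge0 ltW.
  have h3 : N * ((c0 / vs2 * (shi / N)) / shi) = c0 / vs2.
    by field; rewrite N00 !gt_eqF //; apply: lt_le_trans vs1.
  have h4 : c0 / vs2 <= c0.
    rewrite ler_pdivrMr; last by apply: lt_le_trans vs1.
    by rewrite ler_peMr.
  by apply: le_trans h1 _; apply: le_trans h2 _; rewrite h3.
set E := expR m.
have E0 : 0 < E by exact: expR_gt0.
have E1 : E * (1 - m) <= 1.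
  have : 1 - m <= expR (- m) by have := expR_ge1Dx (- m).
  move=> h; apply: le_trans (ler_wpM2l (ltW E0) h) _.
  by rewrite expRN /E mulfV // gt_eqF.
have E2 : E ^+ 2 <= 3/2.
  have m7 : 7/8 <= 1 - m by lra.
  have E7 : E * (7/8) <= 1 by apply: le_trans (ler_wpM2l (ltW E0) m7) E1.
  have E8 : E <= 8/7 by lra.
  rewrite expr2; apply: le_trans (ler_pM (ltW E0) (ltW E0) E8 E8) _; lra.
pose nv := (v *m v^T) 0 0.
have nvpos : 0 < nv.
  have nge : forall i, 0 <= v 0 i * v^T i 0.
    by move=> i; rewrite [v^T i 0]mxE -expr2 sqr_ge0.
  rewrite lt_def; apply/andP; split; last by rewrite /nv mxE; apply: sumr_ge0 => i _.
  apply/negP => /eqP n0; move/negP: vn0; apply; apply/eqP/matrixP => i j.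
  rewrite (ord1 i) mxE.
  have := @psumr_eq0P _ _ predT (fun i => v 0 i * v^T i 0) (fun i _ => nge i).
  move=> /(_ _ j isT); rewrite /nv mxE in n0 => /(_ n0) /eqP.
  by rewrite [v^T j 0]mxE mulf_eq0 orbb => /eqP.
have q'E : (v *m Hmat X th *m v^T) 0 0 = lam * nv.
  by rewrite hv -scalemxAl mxE.
have [rlo rhi] := rayleigh (slo ^+ 2) (shi ^+ 2) v (Hmat_sym X ths).
have Qlo := rlo (fun l hl => proj1 (andP (Hb l hl))).
have Qhi := rhi (fun l hl => proj2 (andP (Hb l hl))).
pose y := fun j => (v *m X^T) 0 j.
have e1 : (v *m Hmat X th *m v^T) 0 0 = Qv (Asm X th) y := quadH X th v.
have e2 : (v *m Hmat X ths *m v^T) 0 0 = Qv (Asm X ths) y := quadH X ths v.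
have c1 : Qv (Asm X th) y <= E ^+ 2 * Qv (Asm X ths) y.
  apply: Qv_cmp; [exact: sumAsm | exact: sumAsm | exact: Asm_ge0 | ].
  by move=> j; exact: Asm_ratio.
have c2 : Qv (Asm X ths) y <= E ^+ 2 * Qv (Asm X th) y.
  apply: Qv_cmp; [exact: sumAsm | exact: sumAsm | exact: Asm_ge0 | ].
  by move=> j; exact: Asm_ratio.
rewrite -e1 q'E in c1 c2; rewrite -e2 in c1 c2.
rewrite -/nv in Qlo Qhi.
have sh0 : 0 <= shi ^+ 2 * nv by rewrite mulr_ge0 // ?sqr_ge0 // ltW.
have sl0 : 0 <= slo ^+ 2 * nv by rewrite mulr_ge0 // ?sqr_ge0 // ltW.
apply/andP; split.
  have t0 : 0 <= lam * nv.
    have : 0 <= E ^+ 2 * (lam * nv) by apply: le_trans sl0 (le_trans Qlo c2).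
    by rewrite pmulr_rge0 // exprn_gt0.
  have h : slo ^+ 2 * nv <= 3/2 * (lam * nv).
    have h' : E ^+ 2 * (lam * nv) <= 3/2 * (lam * nv) := ler_wpM2r t0 E2.
    exact: le_trans Qlo (le_trans c2 h').
  rewrite -(ler_pM2r nvpos).
  rewrite -mulrA.
  exact: fin_lo h t0.
have h : lam * nv <= 3/2 * (shi ^+ 2 * nv).
  have h' : E ^+ 2 * (shi ^+ 2 * nv) <= 3/2 * (shi ^+ 2 * nv) := ler_wpM2r sh0 E2.
  exact: le_trans c1 (le_trans (ler_wpM2l (ltW (exprn_gt0 2 E0)) Qhi) h').
rewrite -(ler_pM2r nvpos).
rewrite -mulrA.
exact: fin_hi h sh0.
Qed.
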